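(* Let $\mathbb F$ have characteristic $0$ and let $f(\mathbf x)\in\mathbb F^k[\mathbf x]$ be an arity-$n$ polynomial of degree $d$ with coefficients in $\mathbb F^k$. Let $\mathbf w\in\mathbb N^n$ be a basis isolating weight assignment for $f$. Then $f(\mathbf x+t^{\mathbf w}):=f(x_1+t^{w_1},\dots,x_n+t^{w_n})$, viewed as a polynomial in $\mathbf x$ with coefficients in $\mathbb F(t)^k$, has a cone-closed basis over $\mathbb F(t)$.
   Context: For $f\in\mathbb F^k[\mathbf x]$, $\mathrm{coef}_{\mathbf x^{\mathbf e}}(f)\in\mathbb F^k$ is the coefficient vector of monomial $\mathbf x^{\mathbf e}$, and $\mathrm{lrsp}(f)$ is the span of all coefficient vectors. A monomial $\mathbf x^{\mathbf e}$ is a submonomial of $\mathbf x^{\mathbf f}$ if $\mathbf e\le\mathbf f$ coordinatewise; a set of monomials is cone-closed if it contains every submonomial of each of its elements. $f$ has a cone-closed basis if there is a cone-closed set $B$ of monomials whose coefficients form a basis of $\mathrm{lrsp}(f)$. A weight assignment $\mathbf w\in\mathbb N^n$ gives monomial $\mathbf x^{\mathbf e}$ weight $\mathbf w(\mathbf e)=\sum_i e_iw_i$. $\mathbf w$ is basis isolating for $f$ if there is a set of monomials $B$ whose coefficients form a basis of $\mathrm{lrsp}(f)$ such that (1) the monomials in $B$ have pairwise distinct weights, and (2) for every monomial $m$ in the support of $f$ not in $B$, $\mathrm{coef}_m(f)$ lies in the span of $\{\mathrm{coef}_{m'}(f): m'\in B,\ \mathbf w(m')<\mathbf w(m)\}$.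 *)

(* Defs.v *)
(* Multivariate polynomials are not in the library, so we
   represent a polynomial in n variables of (individual) exponent <= d with
   coefficients in K^k as a finite function from exponent vectors to row
   vectors 'rV[K]_k. *)
From HB Require Import structures.
From mathcomp Require Import all_boot all_order all_algebra.
Set Implicit Arguments. Unset Strict Implicit. Unset Printing Implicit Defensive.
Import Order.TTheory GRing.Theory Num.Theory.
Local Open Scope ring_scope.

Definition mon (n d : nat) := {ffun 'I_n -> 'I_d.+1}.

Definition mpoly (K : fieldType) (n d k : nat) := {ffun mon n d -> 'rV[K]_k}.

Definition tdeg n d (e : mon n d) : nat := (\sum_(i < n) e i)%N.

(* total degree of a polynomial (0 for the zero polynomial) *)
Definition mdeg K n d k (f : mpoly K n d k) : nat :=
  (\max_(e : mon n d | f e != 0%R) tdeg e)%N.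

Definition submon n d (e e' : mon n d) : bool := [forall i, (e i <= e' i)%N].

Definition cone_closed n d (B : {set mon n d}) : Prop :=
  forall e e', e' \in B -> submon e e' -> e \in B.

Definition lrsp K n d k (f : mpoly K n d k) := (\sum_(e : mon n d) <<f e>>)%MS.

Definition coefmx K n d k (f : mpoly K n d k) (B : {set mon n d}) : 'M[K]_(#|B|, k) :=
  \matrix_(i < #|B|) f (enum_val i).

Definition is_coef_basis K n d k (f : mpoly K n d k) (B : {set mon n d}) : bool :=
  row_free (coefmx f B) && (coefmx f B == lrsp f)%MS.

Definition has_cone_closed_basis K n d k (f : mpoly K n d k) : Prop :=
  exists B : {set mon n d}, cone_closed B /\ is_coef_basis f B.

Definition weight n d (w : 'I_n -> nat) (e : mon n d) : nat :=
  (\sum_(i < n) e i * w i)%N.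

Definition basis_isolating K n d k (w : 'I_n -> nat) (f : mpoly K n d k) : Prop :=
  exists B : {set mon n d},
    [/\ is_coef_basis f B,
        {in B &, injective (weight w)} &
        forall e, f e != 0 -> e \notin B ->
          (f e <= \sum_(e' in B | (weight w e' < weight w e)%N) <<f e'>>)%MS].

Definition ratfun (F : fieldType) := {fraction {poly F}}.

(* f(x + t^w) = sum_e c_e prod_i (x_i + t^{w_i})^{e_i}, expanded binomially:
   coefficient of x^a is sum_{e >= a} c_e prod_i C(e_i,a_i) t^{sum_i w_i (e_i - a_i)},
   viewed in F(t)^k. *)
Definition shift_poly (F : fieldType) n d k (w : 'I_n -> nat) (f : mpoly F n d k)
  : mpoly (ratfun F) n d k :=
  [ffun a : mon n d =>
     \sum_(e : mon n d | submon a e)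
        (tofrac ((\prod_(i < n) 'C(e i, a i))%:R *: 'X^(\sum_(i < n) w i * (e i - a i))))
          *: map_mx (fun c : F => tofrac c%:P) (f e)].

(* Main.v *)
Require Import Defs.
From HB Require Import structures.
From mathcomp Require Import all_boot all_order all_algebra zify.
Set Warnings "-notation-overridden,-ambiguous-paths,-deprecated-since-mathcomp-2.5.0".
Import Order.TTheory GRing.Theory Num.Theory.
Local Open Scope ring_scope.
Set Implicit Arguments. Unset Strict Implicit. Unset Printing Implicit Defensive.

Lemma digits_inj B N (c c' : 'I_N -> nat) :
  (forall k, (c k < B)%N) -> (forall k, (c' k < B)%N) ->
  (\sum_(k < N) c k * B ^ k = \sum_(k < N) c' k * B ^ k)%N -> c =1 c'.
Proof.
elim: N c c' => [|N IH] c c' hc hc' /=; first by move=> _ [].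

rewrite !big_ord_recl /= !expn0 !muln1.
have hB : (0 < B)%N by have := hc ord0; lia.
have E (x : 'I_N.+1 -> nat) : (\sum_(i < N) x (lift ord0 i) * B ^ (bump 0 i) =
   B * \sum_(i < N) x (lift ord0 i) * B ^ i)%N.
  rewrite big_distrr /=; apply: eq_bigr => i _; rewrite /bump /= add1n expnS; lia.
rewrite !E => h.
have h0 : c ord0 = c' ord0.
  have := congr1 (modn^~ B) h.
  by rewrite ![(c _ + _)%N]addnC ![(c' _ + _)%N]addnC ![(B * _)%N]mulnC !modnMDl !modn_small.
move: h; rewrite h0 => /addnI /eqP; rewrite eqn_mul2l (gtn_eqF hB) /= => /eqP h.
have := IH (fun i => c (lift ord0 i)) (fun i => c' (lift ord0 i)) (fun i => hc _) (fun i => hc' _) h.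
move=> Hl k; case: (unliftP ord0 k) => [j ->|->] //; exact: Hl.
Qed.

Section Comb.
Variables (F : fieldType) (n d m : nat) (bet : 'I_m -> mon n d).
Hypothesis Fchar : [pchar F] =i pred0.
Hypothesis betinj : injective bet.
Implicit Types (a b c e : mon n d) (i k : 'I_n).

Definition binm (b a : mon n d) : nat := (\prod_(k < n) 'C(b k, a k))%N.
Definition vv (a : mon n d) : 'rV[F]_m := \row_j (binm (bet j) a)%:R.
Definition rho (a : mon n d) : nat := (\sum_(k < n) a k * d.+1 ^ k)%N.
Definition incr (a : mon n d) (i : 'I_n) : mon n d :=
  [ffun k => if k == i then inord (a i).+1 else a k].

Lemma incr_i a i : (a i < d)%N -> incr a i i = (a i).+1 :> nat.
Proof. by move=> h; rewrite ffunE eqxx inordK. Qed.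
Lemma incr_k a i k : k != i -> incr a i k = a k.
Proof. by move=> h; rewrite ffunE (negbTE h). Qed.

Lemma rho_incr a i : (a i < d)%N -> rho (incr a i) = (rho a + d.+1 ^ i)%N.
Proof.
move=> h; rewrite /rho (bigD1 i) //= [X in _ = (X + _)%N](bigD1 i) //= incr_i //.
have -> : (\sum_(k | k != i) incr a i k * d.+1 ^ k = \sum_(k | k != i) a k * d.+1 ^ k)%N.
  by apply: eq_bigr => k hk; rewrite incr_k.
by rewrite mulSn [RHS]addnC addnA.
Qed.

Lemma submonP a b : submon a b -> forall k, (a k <= b k)%N.
Proof. by move/forallP. Qed.

Lemma rho_le a b : submon a b -> (rho a <= rho b)%N.
Proof. by move=> h; apply: leq_sum => k _; rewrite leq_mul2r (submonP h) orbT. Qed.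

Lemma neq_mon a b : a != b -> exists k, a k != b k.
Proof.
move=> h; apply/existsP; apply: contraR h => /existsPn hn; apply/eqP/ffunP => k.
by apply/eqP; move: (hn k); rewrite negbK.
Qed.

Lemma rho_lt a b : submon a b -> a != b -> (rho a < rho b)%N.
Proof.
move=> h /neq_mon [k hk].
have hk' : (a k < b k)%N by rewrite ltn_neqAle hk (submonP h).
rewrite /rho (bigD1 k) //= [X in (_ < X)%N](bigD1 k) //=.
have h1 : (\sum_(i | i != k) a i * d.+1 ^ i <= \sum_(i | i != k) b i * d.+1 ^ i)%N.
  by apply: leq_sum => i _; rewrite leq_mul2r (submonP h) orbT.
have h2 : (a k * d.+1 ^ k < b k * d.+1 ^ k)%N by rewrite ltn_pmul2r // expn_gt0.
by rewrite -addSn; apply: leq_add.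
Qed.

Lemma rho_inj : injective rho.
Proof.
move=> a b h; apply/ffunP => k; apply: val_inj.
exact: (@digits_inj d.+1 n (fun k => nat_of_ord (a k)) (fun k => nat_of_ord (b k))
  (fun k => ltn_ord _) (fun k => ltn_ord _) h k).
Qed.

Lemma binm0 b a i : (b i < a i)%N -> binm b a = 0%N.
Proof. by move=> h; rewrite /binm (bigD1 i) //= bin_small. Qed.

Lemma binm_submon b a : binm b a != 0%N -> submon a b.
Proof.
move=> h; apply/forallP => k; rewrite leqNgt; apply: contra h => hk.
by rewrite (binm0 hk).
Qed.

Lemma binm_self b : binm b b = 1%N.
Proof. by rewrite /binm big1 // => k _; rewrite binn. Qed.

Lemma binm_incr b a i : (a i < d)%N ->
  ((a i).+1 * binm b (incr a i) = (b i - a i) * binm b a)%N.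
Proof.
move=> h; rewrite /binm (bigD1 i) //= [X in _ = (_ * X)%N](bigD1 i) //= incr_i //.
have -> : (\prod_(k | k != i) 'C(b k, incr a i k) = \prod_(k | k != i) 'C(b k, a k))%N.
  by apply: eq_bigr => k hk; rewrite incr_k.
by rewrite mulnA mul_bin_left mulnA.
Qed.

Definition Tm (i : 'I_n) : 'M[F]_m := diag_mx (\row_j (bet j i : nat)%:R).

Lemma vvT1 a i : (a i < d)%N ->
  ((a i).+1)%:R *: vv (incr a i) = vv a *m Tm i - (a i)%:R *: vv a.
Proof.
move=> h; apply/rowP => j; rewrite mul_mx_diag !mxE -natrM binm_incr //.
case: (leqP (a i) (bet j i)) => hle.
  by rewrite natrM natrB // mulrBl mulrC [X in _ - X]mulrC.
by rewrite (binm0 hle) muln0 !mul0r mulr0 subr0.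
Qed.

Lemma vvT2 a i : a i = d :> nat -> vv a *m Tm i = (a i)%:R *: vv a.
Proof.
move=> h; apply/rowP => j; rewrite mul_mx_diag !mxE.
case: (ltnP (bet j i) (a i)) => hle.
  by rewrite (binm0 hle) mul0r mulr0.
have : (bet j i <= d)%N by rewrite -ltnS ltn_ord.
move=> h2; have E : (bet j i : nat) = a i by lia.
by rewrite E mulrC.
Qed.

Definition U r := (\sum_(c | (rho c < r)%N) <<vv c>>)%MS.

Lemma U_mono r1 r2 : (r1 <= r2)%N -> (U r1 <= U r2)%MS.
Proof.
move=> h; apply/sumsmx_subP => c hc; apply: (sumsmx_sup c); last exact: submx_refl.
exact: leq_trans hc h.
Qed.

Lemma vv_U c r : (rho c < r)%N -> (vv c <= U r)%MS.
Proof. by move=> h; apply: (sumsmx_sup c) => //; rewrite genmxE. Qed.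

Lemma negsub (m1 m2 p : nat) (A : 'M[F]_(m1, p)) (B : 'M[F]_(m2, p)) :
  (A <= B)%MS -> (- A <= B)%MS.
Proof. by move=> h; rewrite -scaleN1r scalemx_sub. Qed.

Lemma step a i : (a i < d)%N -> (vv a <= U (rho a))%MS ->
  (vv (incr a i) <= U (rho (incr a i)))%MS.
Proof.
move=> hd H.
have hr := rho_incr hd.
have H1 : (vv a <= U (rho (incr a i)))%MS.
  by apply: submx_trans H (U_mono _); rewrite hr leq_addr.
have H2 : (vv a *m Tm i <= U (rho (incr a i)))%MS.
  apply: submx_trans (submxMr (Tm i) H) _.
  rewrite sumsmxMr; apply/sumsmx_subP => c hc.
  rewrite (eqmxMr _ (genmxE _)).
  have : (c i <= d)%N by rewrite -ltnS ltn_ord.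
  rewrite leq_eqVlt => /orP [/eqP he | hlt].
    by rewrite vvT2 // scalemx_sub // vv_U // hr; lia.
  have E := vvT1 hlt.
  have -> : vv c *m Tm i = ((c i).+1)%:R *: vv (incr c i) + (c i)%:R *: vv c.
    by rewrite E subrK.
  apply: addmx_sub; apply: scalemx_sub; apply: vv_U; rewrite ?rho_incr //; lia.
have hne : ((a i).+1)%:R != 0 :> F by move/pcharf0P: Fchar => ->.
have -> : vv (incr a i) = ((a i).+1%:R)^-1 *: (vv a *m Tm i - (a i)%:R *: vv a).
  by rewrite -vvT1 // scalerA mulVf // scale1r.
by apply: scalemx_sub; apply: addmx_sub => //; apply: negsub; apply: scalemx_sub.
Qed.

Definition Aset : {set mon n d} := [set a | ~~ (vv a <= U (rho a))%MS].

Lemma cone_step N : forall a a', (rho a - rho a' < N)%N -> submon a' a ->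
  (vv a' <= U (rho a'))%MS -> (vv a <= U (rho a))%MS.
Proof.
elim: N => [//|N IH] a a' hN hs H.
have [<-//|hne] := eqVneq a' a.
have [i hi] := neq_mon hne.
have hlt : (a' i < a i)%N by rewrite ltn_neqAle hi (submonP hs).
have hd : (a' i < d)%N by have := ltn_ord (a i); lia.
have hs2 : submon (incr a' i) a.
  apply/forallP => k; have [->|hk] := eqVneq k i; first by rewrite incr_i.
  by rewrite incr_k // (submonP hs).
apply: (IH a (incr a' i)) => //; last exact: step.
have := rho_le hs2; rewrite rho_incr //.
have : (0 < d.+1 ^ i)%N by rewrite expn_gt0.
lia.
Qed.

Lemma Aset_cone : cone_closed Aset.
Proof.
move=> e e'; rewrite !inE => he' hs; apply: contra he' => he.
exact: (@cone_step (rho e' - rho e).+1 e' e).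
Qed.

Definition SA r := (\sum_(a | (a \in Aset) && (rho a < r)%N) <<vv a>>)%MS.

Lemma rankind r : (SA r :=: U r)%MS /\
  \rank (SA r) = #|[pred a | (a \in Aset) && (rho a < r)%N]|.
Proof.
elim: r => [|r [IH1 IH2]].
  rewrite /SA /U !big_pred0 ?mxrank0 ?eq_card0 // => x; rewrite ?inE ltn0 ?andbF //.
case: (pickP (fun c => rho c == r)) => [c /eqP hc | hno]; last first.
  have key x : (rho x < r.+1)%N = (rho x < r)%N.
    by rewrite ltnS leq_eqVlt hno.
  rewrite /SA /U (eq_bigl _ _ (fun x => congr1 (andb _) (key x))) (eq_bigl _ _ key).
  rewrite (eq_card (B := [pred a | (a \in Aset) && (rho a < r)%N])) //.
  by move=> x; rewrite !inE key.
have key x : (rho x < r.+1)%N = (x == c) || (rho x < r)%N.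
  have [->|hx] := eqVneq x c; first by rewrite hc ltnSn.
  rewrite ltnS leq_eqVlt /=; case: eqP => // hr.
  by case/eqP: hx; apply: rho_inj; rewrite hr hc.
have U1 : U r.+1 = (<<vv c>> + U r)%MS.
  rewrite /U (bigD1 c) /= ?hc ?ltnSn //; congr (_ + _)%MS; apply: eq_bigl => x.
  by rewrite key; case: (eqVneq x c) => [->|_]; rewrite /= ?hc ?ltnn ?andbT ?andbF.
case: (boolP (c \in Aset)) => hA.
  have S1 : SA r.+1 = (<<vv c>> + SA r)%MS.
    rewrite /SA (bigD1 c) /= ?hA ?hc ?ltnSn //; congr (_ + _)%MS; apply: eq_bigl => x.
    by rewrite key; case: (eqVneq x c) => [->|_]; rewrite /= ?andbT ?andbF ?hc ?ltnn ?andbF ?andbT.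
  rewrite S1 U1; split; first exact: adds_eqmx.
  rewrite (cardD1 c) inE hA hc ltnSn /=.
  rewrite (eq_card (B := [pred a | (a \in Aset) && (rho a < r)%N])); last first.
    by move=> x; rewrite !inE key; case: (eqVneq x c) => [->|_]; rewrite /= ?andbT ?andbF ?hc ?ltnn ?andbF.
  rewrite -IH2; apply/eqP; rewrite eqn_leq; apply/andP; split.
    have := mxrank_adds_leqif <<vv c>>%MS (SA r); move=> [h _]; apply: leq_trans h _.
    by rewrite genmxE leq_add2r rank_leq_row.
  have : (SA r < <<vv c>> + SA r)%MS.
    rewrite ltmxE addsmxSr /=; apply/negP => h; move: hA; rewrite inE => /negP; apply.
    rewrite hc -IH1; apply: submx_trans h; rewrite -(genmxE (vv c)).
    exact: addsmxSl.
  by rewrite ltmxErank => /andP [].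
have hcU : (vv c <= U r)%MS by move: hA; rewrite inE negbK hc.
have S1 : SA r.+1 = SA r.
  rewrite /SA; apply: eq_bigl => x; rewrite key.
  by case: (eqVneq x c) => [->|_]; rewrite /= ?andbT ?andbF ?(negbTE hA).
rewrite S1; split.
  rewrite U1; apply: eqmx_trans IH1 _; apply: eqmx_sym; apply/addsmx_idPr.
  by rewrite genmxE.
rewrite IH2; apply: eq_card => x; rewrite !inE key.
case: (eqVneq x c) => [->|_]; rewrite /= ?orbF ?andbT ?andbF //.
by rewrite hc ltnn andbF; move: hcU; rewrite -hc => ->.
Qed.

Definition Sall := (\sum_(a : mon n d) <<vv a>>)%MS.

Lemma Sall_full : \rank Sall = m.
Proof.
set M := (\max_(a : mon n d) rho a)%N.
have hd : forall K j, (M < K + rho (bet j))%N -> ((delta_mx 0 j : 'rV[F]_m) <= Sall)%MS.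
  elim=> [|K IH] j hj.
    by have := leq_bigmax (F:=rho) (bet j); rewrite -/M; lia.
  have hv : (vv (bet j) <= Sall)%MS by apply: (sumsmx_sup (bet j)) => //; rewrite genmxE.
  have E := row_sum_delta (vv (bet j)).
  rewrite (bigD1 j) //= mxE binm_self scale1r in E.
  have -> : 'e_j = vv (bet j) - \sum_(l | l != j) vv (bet j) 0 l *: 'e_l.
    by rewrite {1}E addrK.
  apply: addmx_sub => //; apply: negsub; apply: summx_sub => l hl.
  rewrite mxE; case: (eqVneq (binm (bet l) (bet j)) 0%N) => [->|hb].
    by rewrite scale0r sub0mx.
  apply: scalemx_sub; apply: IH.
  have hne : bet j != bet l by apply: contra hl => /eqP /betinj ->.
  have := rho_lt (binm_submon hb) hne; lia.
apply/eqP; rewrite eqn_leq rank_leq_col /=.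
rewrite -{1}(mxrank1 F m) mxrankS //; apply/row_subP => j; rewrite row1.
by apply: (hd M.+1 j); lia.
Qed.

Lemma comb_main :
  cone_closed Aset /\ #|Aset| = m /\
  \rank (\sum_(a in Aset) <<vv a>>)%MS = #|Aset|.
Proof.
have [H1 H2] := rankind (\max_(a : mon n d) rho a).+1.
have e1 x : (x \in Aset) && (rho x < (\max_(a : mon n d) rho a).+1)%N = (x \in Aset).
  by rewrite ltnS leq_bigmax andbT.
have hS : SA (\max_(a : mon n d) rho a).+1 = (\sum_(a in Aset) <<vv a>>)%MS.
  by rewrite /SA; apply: eq_bigl => x; rewrite e1.
have hU : U (\max_(a : mon n d) rho a).+1 = Sall.
  by rewrite /U /Sall; apply: eq_bigl => x; rewrite ltnS leq_bigmax.
have hc : #|[pred a | (a \in Aset) && (rho a < (\max_(a : mon n d) rho a).+1)%N]| = #|Aset|.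
  by apply: eq_card => x; rewrite inE e1.
rewrite hS hU hc in H1 H2.
split; first exact: Aset_cone.
by rewrite -H2 (eqmx_rank (introT eqmxP H1)) Sall_full.
Qed.

End Comb.

Lemma rank_cast (K : fieldType) p q r (M : 'M[K]_(p, r)) (h : p = q) :
  \rank (castmx (h, erefl r) M) = \rank M.
Proof. by case: q / h; rewrite castmx_id. Qed.

Lemma rowsofE (K : fieldType) n d p (r : mon n d -> 'rV[K]_p) (X : {set mon n d}) :
  (\matrix_(i < #|X|) r (enum_val i) == \sum_(a in X) <<r a>>)%MS.
Proof.
apply/andP; split.
  apply/row_subP => i; rewrite rowK; apply: (sumsmx_sup (enum_val i)).
    exact: enum_valP.
  by rewrite genmxE.
apply/sumsmx_subP => a ha; rewrite genmxE.
have := row_sub (enum_rank_in ha a) (\matrix_(i < #|X|) r (enum_val i)).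
by rewrite rowK enum_rankK_in.
Qed.

Section Main.
Variables (F : fieldType) (n d k : nat) (f : mpoly F n d k) (w : 'I_n -> nat)
  (B : {set mon n d}).
Hypothesis Fchar : [pchar F] =i pred0.
Hypothesis HB : is_coef_basis f B.
Hypothesis Hiso : forall e, f e != 0 -> e \notin B ->
  (f e <= \sum_(e' in B | (weight w e' < weight w e)%N) <<f e'>>)%MS.
Implicit Types (a b e : mon n d).

Local Notation m := #|B|.
Definition betB (j : 'I_m) : mon n d := enum_val j.
Local Notation CB := (coefmx f B).

Lemma HCfree : row_free CB. Proof. by case/andP: HB. Qed.
Lemma HCeq : (CB == lrsp f)%MS. Proof. by case/andP: HB. Qed.

Definition lam e : 'rV[F]_m := f e *m pinvmx CB.

Lemma lamE e : lam e *m CB = f e.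
Proof.
apply: mulmxKpV; rewrite (eqmxP HCeq); apply: (sumsmx_sup e) => //.
by rewrite genmxE.
Qed.

Lemma lam_self j : lam (betB j) = delta_mx 0 j.
Proof.
apply: (row_free_inj HCfree); rewrite /= lamE -rowE rowK //.
Qed.

Lemma lam_spec e j : lam e 0 j != 0 ->
  (weight w (betB j) < weight w e)%N || ((e == betB j) && (lam e 0 j == 1)).
Proof.
move=> hl; case: (boolP (e \in B)) => heB.
  have ej0 : betB (enum_rank_in heB e) = e by rewrite /betB enum_rankK_in.
  move: hl; rewrite -ej0 lam_self mxE /=.
  move: (enum_rank_in heB e) ej0 => j0 _.
  case: (eqVneq j j0) => [hj|hj] /=; last by rewrite mulr0n eqxx.
  by rewrite hj eqxx mulr1n eqxx orbT.
have [fe0|fe0] := eqVneq (f e) 0.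
  by move: hl; rewrite /lam fe0 mul0mx mxE eqxx.
set D := diag_mx (\row_j0 (if (weight w (betB j0) < weight w e)%N then 1 else 0 : F)).
have hsub : (f e <= D *m CB)%MS.
  apply: submx_trans (Hiso fe0 heB) _.
  apply/sumsmx_subP => e' /andP [he'B hw]; rewrite genmxE.
  have ej : betB (enum_rank_in he'B e') = e' by rewrite /betB enum_rankK_in.
  have -> : f e' = row (enum_rank_in he'B e') (D *m CB).
    by apply/rowP => l; rewrite mul_diag_mx !mxE ej hw mul1r /betB enum_rankK_in.
  exact: row_sub.
case/submxP: hsub => u hu.
have hl2 : lam e = u *m D by apply: (row_free_inj HCfree); rewrite /= lamE hu mulmxA.
move: hl; rewrite hl2 mul_mx_diag !mxE.
by case: ifP => // _; rewrite mulr0 eqxx.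
Qed.

Definition io : {rmorphism F -> ratfun F} := (@tofrac {poly F} \o polyC).

Definition sh a e : nat := (\sum_(i < n) w i * (e i - a i))%N.
Definition cz a e : {poly F} := (binm e a)%:R *: 'X^(sh a e).

Definition pa a : 'rV[ratfun F]_m :=
  \sum_(e | submon a e) tofrac (cz a e) *: map_mx io (lam e).

Lemma g_pa a : shift_poly w f a = pa a *m map_mx io CB.
Proof.
rewrite /shift_poly ffunE /pa mulmx_suml; apply: eq_bigr => e _.
by rewrite -scalemxAl -map_mxM lamE.
Qed.

Lemma wshift a e : submon a e -> (weight w a + sh a e = weight w e)%N.
Proof.
move=> h; rewrite /weight /sh -big_split /=; apply: eq_bigr => i _.
by rewrite [(w i * _)%N]mulnC -mulnDl subnKC // (submonP h).
Qed.


Lemma wle e j : lam e 0 j != 0 -> (weight w (betB j) <= weight w e)%N.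
Proof.
move/lam_spec => /orP [/ltnW //|/andP [/eqP -> _]]; exact: leqnn.
Qed.

Lemma lam_selfjj j : lam (betB j) 0 j = 1.
Proof. by rewrite lam_self mxE !eqxx. Qed.

Lemma comb_all : exists A : {set mon n d}, [/\ cone_closed A, #|A| = m &
  \rank (\matrix_(i < #|A|) vv F betB (enum_val i)) = #|A|].
Proof.
have binj : injective betB by apply: enum_val_inj.
have [H1 [H2 H3]] := comb_main Fchar binj.
exists (Aset F betB); split => //.
by rewrite (eqmx_rank (rowsofE _ _)).
Qed.

Variable A : {set mon n d}.
Hypothesis Acone : cone_closed A.
Hypothesis Acard : #|A| = m.
Hypothesis Arank : \rank (\matrix_(i < #|A|) vv F betB (enum_val i)) = #|A|.

Definition al (i : 'I_m) : mon n d := enum_val (cast_ord (esym Acard) i).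

Definition V' : 'M[F]_m := \matrix_(i, j) (binm (betB j) (al i))%:R.

Lemma V'det : \det V' != 0.
Proof.
have -> : V' = castmx (Acard, erefl m) (\matrix_(i < #|A|) vv F betB (enum_val i)).
  by apply/matrixP => i j; rewrite castmxE !mxE cast_ord_id.
rewrite -unitfE -unitmxE -row_free_unit /row_free rank_cast Arank Acard.
exact: eqxx.
Qed.

Definition Q : 'M[{poly F}]_m := \matrix_(i, j)
  \sum_(e | submon (al i) e)
     ((binm e (al i))%:R * lam e 0 j) *: 'X^(weight w e - weight w (betB j)).

Lemma QV : map_mx (horner_eval 0) Q = V'.
Proof.
apply/matrixP => i j; rewrite !mxE rmorph_sum /=.
set b := betB j.
have term e : horner_eval 0 (((binm e (al i))%:R * lam e 0 j) *:
      'X^(weight w e - weight w b)) = (e == b)%:R * (binm b (al i))%:R.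
  rewrite horner_evalE hornerZ hornerXn expr0n.
  have [l0|l0] := eqVneq (lam e 0 j) 0.
    have -> : (e == b) = false.
      by apply/negP => /eqP he; move: l0; rewrite he lam_selfjj => /eqP; rewrite oner_eq0.
    by rewrite l0 mulr0 !mul0r.
  case/orP: (lam_spec l0) => [hw|/andP [/eqP he /eqP hl]].
    have -> : (e == b) = false.
      by apply/negP => /eqP he; move: hw; rewrite he ltnn.
    by rewrite subn_eq0 leqNgt hw mulr0 mul0r.
  by rewrite hl he subnn eqxx !mulr1 /b eqxx mul1r.
rewrite (eq_bigr _ (fun e _ => term e)).
case: (boolP (submon (al i) b)) => hs.
  rewrite (bigD1 b) //= eqxx mul1r big1 ?addr0 //.
  by move=> e /andP [_ /negbTE ->]; rewrite mul0r.
rewrite big1; last first.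
  by move=> e he; case: eqVneq he => [-> |]; rewrite ?(negbTE hs) // mul0r.
case: (eqVneq (binm b (al i)) 0%N) => [-> //|/binm_submon hb].
by rewrite hb in hs.
Qed.


Lemma Qdet : \det Q != 0.
Proof.
apply: contraNneq V'det => h.
by rewrite -QV det_map_mx /= h horner_evalE horner0.
Qed.

Definition P' : 'M[ratfun F]_m := \matrix_(i, j) pa (al i) 0 j.

Definition Da : 'M[ratfun F]_m := diag_mx (\row_i tofrac ('X^(weight w (al i)) : {poly F})).
Definition Db : 'M[ratfun F]_m := diag_mx (\row_i tofrac ('X^(weight w (betB i)) : {poly F})).

Lemma pa_entry a j : pa a 0 j =
  tofrac (\sum_(e | submon a e) cz a e * (lam e 0 j)%:P).
Proof.
by rewrite rmorph_sum summxE; apply: eq_bigr => e _; rewrite !mxE rmorphM.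
Qed.

Lemma DP : Da *m P' = map_mx (@tofrac {poly F}) Q *m Db.
Proof.
apply/matrixP => i j; rewrite mul_diag_mx mul_mx_diag !mxE pa_entry -!rmorphM.
congr tofrac; rewrite mulr_sumr mulr_suml; apply: eq_bigr => e he.
have [l0|l0] := eqVneq (lam e 0 j) 0.
  by rewrite l0 polyC0 !mulr0 scale0r mul0r.
have hle := wle l0.
rewrite /cz -!mul_polyC polyCM -!mulrA -exprD subnK // -(wshift he) exprD.
by rewrite mulrCA [(lam e 0 j)%:P * _]mulrC !mulrA.
Qed.


Lemma P'det : \det P' != 0.
Proof.
have h := congr1 determinant DP.
rewrite !det_mulmx det_map_mx /= in h.
apply/negP => /eqP h0; move: h; rewrite h0 mulr0 => /esym/eqP.
rewrite mulf_eq0 tofrac_eq0 (negbTE Qdet) /= det_diag.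
apply/negP; apply/prodf_neq0 => i _; rewrite mxE tofrac_eq0 expf_neq0 //.
by rewrite polyX_eq0.
Qed.

Lemma rankG : \rank (coefmx (shift_poly w f) A) = #|A|.
Proof.
have GP : castmx (Acard, erefl k) (coefmx (shift_poly w f) A) = P' *m map_mx io CB.
  apply/matrixP => i j; rewrite castmxE /= cast_ord_id !mxE g_pa !mxE.
  by apply: eq_bigr => l _; rewrite !mxE.
rewrite -(rank_cast _ Acard) GP mxrankMfree; last first.
  by rewrite /row_free mxrank_map; exact: HCfree.
have := P'det; rewrite -unitfE -unitmxE -row_free_unit /row_free => /eqP ->.
by rewrite Acard.
Qed.

Lemma final_A : is_coef_basis (shift_poly w f) A.
Proof.
have hsub : (coefmx (shift_poly w f) A <= lrsp (shift_poly w f))%MS.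
  apply/row_subP => i; rewrite rowK; apply: (sumsmx_sup (enum_val i)) => //.
  by rewrite genmxE.
have hsub2 : (lrsp (shift_poly w f) <= map_mx io CB)%MS.
  by apply/sumsmx_subP => a _; rewrite genmxE g_pa submxMl.
apply/andP; split; first by rewrite /row_free rankG.
rewrite -(mxrank_leqif_eq hsub).2 eqn_leq (mxrankS hsub) /= rankG Acard.
by apply: leq_trans (mxrankS hsub2) _; rewrite mxrank_map rank_leq_row.
Qed.

End Main.

Unset Implicit Arguments.

Theorem theorem5 (F : fieldType) (n d k : nat) (f : mpoly F n d k)
  (w : 'I_n -> nat) :
  [pchar F] =i pred0 ->
  mdeg f = d ->
  basis_isolating w f ->
  has_cone_closed_basis (shift_poly w f).
Proof.
move=> Fc _ [B [HB _ Hiso]].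
have [A [hcone hcard hrank]] := comb_all B Fc.
exists A; split => //.
exact: (final_A HB Hiso hcard hrank).
Qed.
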